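(* Let $d$ and $m$ be positive integers. Then $$\operatorname{CI}(W(d,m))=\operatorname{CI}(\operatorname{Sym}(d))\big(\operatorname{CI}^{(1)}(\operatorname{Hol}(\mathbb{Z}/m\mathbb{Z})),\dots,\operatorname{CI}^{(d)}(\operatorname{Hol}(\mathbb{Z}/m\mathbb{Z}))\big),$$ i.e. the polynomial $\operatorname{CI}(\operatorname{Sym}(d))\in\mathbb{Q}[x_1,\dots,x_d]$ evaluated at $x_j=\operatorname{CI}^{(j)}(\operatorname{Hol}(\mathbb{Z}/m\mathbb{Z}))$. In particular, if $q$ is a prime power with $d\mid q-1$, then $\operatorname{CI}(\operatorname{GCP}(d,q))$ is given by the same formula with $m=\frac{q-1}{d}$.
   Context: For a permutation $h$ of an $n$-element set, $\operatorname{CT}(h)=x_1^{k_1}\cdots x_n^{k_n}$ with $k_i$ the number of $i$-cycles; $\operatorname{CI}(G)=\frac1{|G|}\sum_{g\in G}\operatorname{CT}(g)$ for a finite permutation group $G$, and $\operatorname{CI}^{(j)}(G)$ is obtained from $\operatorname{CI}(G)$ by substituting $x_i\mapsto x_{ij}$ for all $i$. $\operatorname{Hol}(\mathbb{Z}/m\mathbb{Z})$ is the permutation group on $\mathbb{Z}/m\mathbb{Z}$ of maps $\lambda(a,b):x\mapsto ax+b$, $a$ a unit. $\operatorname{Sym}(d)$ is the symmetric group on $\{0,\dots,d-1\}$. $W(d,m)=\operatorname{Hol}(\mathbb{Z}/m\mathbb{Z})\wr_{\mathrm{imp}}\operatorname{Sym}(d)$, the permutation group on $\mathbb{Z}/m\mathbb{Z}\times\{0,\dots,d-1\}$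 of pairs $(\sigma,(g_0,\dots,g_{d-1}))$ ($\sigma\in\operatorname{Sym}(d)$, $g_i\in\operatorname{Hol}(\mathbb{Z}/m\mathbb{Z})$) acting by $(x,i)\mapsto(g_{\sigma(i)}(x),\sigma(i))$. $\operatorname{GCP}(d,q)$ is the permutation group on $\mathbb{F}_q^{\ast}$ of restrictions of those maps $\mathbb{F}_q\to\mathbb{F}_q$ that are permutations and are of the form $0\mapsto0$, $x\mapsto a_ix^{r_i}$ for $x\in\omega^iC$ ($i=0,\dots,d-1$), where $\omega$ is a primitive root, $C$ the index $d$ subgroup of $\mathbb{F}_q^{\ast}$, $a_i\in\mathbb{F}_q$, $r_i\in\{1,\dots,\frac{q-1}{d}\}$. *)

(* Defs.v *)
From HB Require Import structures.
From mathcomp Require Import all_boot all_order all_algebra all_fingroup.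
From mathcomp Require Import mpoly.
Set Implicit Arguments. Unset Strict Implicit. Unset Printing Implicit Defensive.
Import GRing.Theory.
Local Open Scope ring_scope.

(* Polynomials in the variables x_0, x_1, ..., x_n over Q; the variable x_i
   is 'X_(inord i).  x_0 never occurs (cycle lengths are >= 1); n is always
   chosen >= the degree of the permutation group so inord never truncates. *)
Definition xvar (n i : nat) : {mpoly rat[n.+1]} := 'X_(inord i).

(* CT(h) = prod_i x_i^{k_i}, k_i = number of i-cycles = product over the
   cycles (porbits) c of h of x_{|c|}. *)
Definition CT (T : finType) (n : nat) (h : {perm T}) : {mpoly rat[n.+1]} :=
  \prod_(c in porbits h) xvar n #|c|.

Definition CI (T : finType) (n : nat) (G : {set {perm T}}) : {mpoly rat[n.+1]} :=
  (#|G|%:R)^-1 *: \sum_(g in G) CT n g.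

Definition CIpow (k n : nat) (p : {mpoly rat[k.+1]}) (j : nat) : {mpoly rat[n.+1]} :=
  p \mPo [tuple xvar n (i * j) | i < k.+1].

Definition Hol (m : nat) : {set {perm 'I_m}} :=
  [set s : {perm 'I_m} | [exists a : 'I_m, exists b : 'I_m,
     coprime a m && [forall x : 'I_m, val (s x) == (a * x + b) %% m]%N]].

Definition Sym (d : nat) : {set {perm 'I_d}} := [set: {perm 'I_d}].

Definition W (d m : nat) : {set {perm ('I_m * 'I_d)}} :=
  [set s : {perm ('I_m * 'I_d)} | [exists sigma : {perm 'I_d},
     exists g : {ffun 'I_d -> {perm 'I_m}},
     [forall i, g i \in Hol m] &&
     [forall p : 'I_m * 'I_d, s p == (g (sigma p.2) p.1, sigma p.2)]]].

(* GCP(d,q) on F_q^* = {unit F}, with primitive root w and C the index-d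
   subgroup of F^*: restrictions to F^* of permutations of F fixing 0 and
   equal to x |-> a_i x^{r_i} on the coset w^i C, with a_i in F and
   1 <= r_i <= (q-1)/d.  (Since 0 |-> 0, such a map permutes F iff its
   restriction permutes F^*.) *)
Definition GCP (F : finFieldType) (d : nat) (w : {unit F})
    (C : {set {unit F}}) : {set {perm {unit F}}} :=
  [set s : {perm {unit F}} | [exists a : {ffun 'I_d -> F},
     exists r : {ffun 'I_d -> 'I_#|F|},
     [forall i, (1 <= r i <= #|F|.-1 %/ d)%N] &&
     [forall i : 'I_d, forall u : {unit F},
        (u \in lcoset C (w ^+ i)%g) ==> (val (s u) == a i * (val u) ^+ r i)]]].

Definition wreath_CI (n d m : nat) : {mpoly rat[n.+1]} :=
  CI d (Sym d) \mPo [tuple CIpow n (CI m (Hol m)) i | i < d.+1].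

(* Main.v *)
Require Import Defs.
From HB Require Import structures.
From mathcomp Require Import all_boot all_order all_algebra all_fingroup.
From mathcomp Require Import mpoly.
From mathcomp Require Import all_solvable all_field zify.
Set Implicit Arguments. Unset Strict Implicit. Unset Printing Implicit Defensive.
Import GRing.Theory Num.Theory.
Local Open Scope ring_scope.

Section Orb.
Local Open Scope nat_scope.
Variable T : finType.
Implicit Types (s : {perm T}) (x : T).

Lemma expg_porbit_fix s x n : ((s ^+ n)%g x == x) = (#|porbit s x| %| n)%N.
Proof.
set c := #|porbit s x|.
have hc : (s ^+ c)%g x = x by rewrite permX iter_porbit.
have hmod : forall k, (s ^+ k)%g x = (s ^+ (k %% c))%g x.
  move=> k; rewrite {1}(divn_eq k c) expgD permM.
  elim: (k %/ c) => [|j IH]; first by rewrite mul0n expg0 perm1.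
  by rewrite mulSn expgD permM hc.
rewrite hmod /dvdn; have lt : (n %% c < c)%N by rewrite ltn_mod lt0n card_porbit_neq0.
case: (posnP (n %% c)) => [->|pos]; first by rewrite expg0 perm1 !eqxx.
apply/negP => /eqP E.
have U := uniq_traject_porbit s x.
have := nth_uniq x (_ : n %% c < size (traject s x c)) (_ : 0 < size (traject s x c)) U.
rewrite !size_traject !nth_traject ?(ltn_trans pos lt) // => /(_ lt isT).
rewrite -permX E eqxx => /esym /eqP h; by rewrite h in pos.
Qed.

Lemma card_porbit_unique s x c : (forall n, ((s ^+ n)%g x == x) = (c %| n)%N) ->
  #|porbit s x| = c.
Proof.
move=> H; apply/eqP; rewrite eqn_dvd -expg_porbit_fix H dvdnn /=.
by rewrite -H expg_porbit_fix dvdnn.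
Qed.

End Orb.

Section Conj.
Variables (T U : finType) (f : T -> U) (f' : U -> T).
Hypotheses (fK : cancel f f') (f'K : cancel f' f).

Definition conjfun (s : {perm T}) (u : U) := f (s (f' u)).
Lemma conjfun_inj s : injective (conjfun s).
Proof. by move=> u v /(can_inj fK) /perm_inj /(can_inj f'K). Qed.
Definition conjp (s : {perm T}) : {perm U} := perm (@conjfun_inj s).

Lemma conjpE s x : conjp s (f x) = f (s x).
Proof. by rewrite permE /conjfun fK. Qed.

Lemma conjpX s n x : (conjp s ^+ n)%g (f x) = f ((s ^+ n)%g x).
Proof.
elim: n => [|n IH]; first by rewrite !expg0 !perm1.
by rewrite !expgSr !permM IH conjpE.
Qed.

Lemma porbit_conjp s x : porbit (conjp s) (f x) = f @: porbit s x.
Proof.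
apply/setP => u; apply/porbitP/imsetP => [[n ->]|[y /porbitP[n ->] ->]].
  by exists ((s ^+ n)%g x); [apply/porbitP; exists n|rewrite conjpX].
by exists n; rewrite conjpX.
Qed.

Lemma porbits_conjp s : porbits (conjp s) = (fun c : {set T} => f @: c) @: porbits s.
Proof.
apply/setP => C; apply/imsetP/imsetP => [[u _ ->]|[c /imsetP[x _ ->] ->]].
  by exists (porbit s (f' u)); [apply: imset_f|rewrite -porbit_conjp f'K].
by exists (f x) => //; rewrite porbit_conjp.
Qed.

Lemma conjp_inj : injective conjp.
Proof.
move=> s t E; apply/permP => x; apply: (can_inj fK).
by rewrite -!conjpE E.
Qed.

Lemma CT_conjp n s : CT n (conjp s) = CT n s.
Proof.
rewrite /CT porbits_conjp big_imset /=; last first.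
  by move=> c c' _ _; apply: imset_inj; apply: (can_inj fK).
by apply: eq_bigr => c _; rewrite card_imset //; apply: (can_inj fK).
Qed.

Lemma CI_conjp n (G : {set {perm T}}) (G' : {set {perm U}}) :
  G' = conjp @: G -> CI n G' = CI n G.
Proof.
move=> ->; rewrite /CI card_imset; last exact: conjp_inj.
rewrite big_imset /=; last by move=> ? ? _ _; apply: conjp_inj.
by congr (_ *: _); apply: eq_bigr => s _; rewrite CT_conjp.
Qed.
End Conj.

Section HolGrp.
Local Open Scope nat_scope.
Variable m : nat.
Hypothesis m_pos : 0 < m.

Lemma HolP (s : {perm 'I_m}) :
  reflect (exists a b : nat, coprime a m /\ forall x : 'I_m, val (s x) = (a * x + b) %% m)
          (s \in Hol m).
Proof.
rewrite inE; apply: (iffP existsP) => [[a /existsP[b /andP[ca /forallP H]]]|[a [b [ca H]]]].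
  by exists a, b; split=> // x; apply/eqP/H.
exists (Ordinal (ltn_pmod a m_pos)); apply/existsP; exists (Ordinal (ltn_pmod b m_pos)).
rewrite /= coprime_modl ca; apply/forallP => x; rewrite H.
rewrite modnDmr -modnDml; apply/eqP; rewrite modnDml -[in RHS]modnDml modnMml modnDml.
done.
Qed.

Lemma Hol_group_set : group_set (Hol m).
Proof.
apply/andP; split.
  apply/HolP; exists 1, 0; split; first exact: coprime1n.
  by move=> x; rewrite perm1 mul1n addn0 modn_small.
apply/subsetP => u /mulsgP[s t /HolP[a [b [ca Hs]]] /HolP[c [e [cc Ht]]] ->].
apply/HolP; exists (c * a), (c * b + e); split; first by rewrite coprimeMl cc ca.
move=> x; rewrite permM Ht Hs.
by rewrite -modnDml modnMmr modnDml mulnDr mulnA addnA.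
Qed.

Definition HolG := Group Hol_group_set.
Lemma HolGE : (HolG :=: Hol m)%g. Proof. by []. Qed.
End HolGrp.

Section Wreath.
Local Open Scope nat_scope.
Variables d m : nat.

Definition mkfun (sg : {perm 'I_d}) (g : {ffun 'I_d -> {perm 'I_m}}) (p : 'I_m * 'I_d) :=
  (g (sg p.2) p.1, sg p.2).
Lemma mkfun_inj sg g : injective (mkfun sg g).
Proof.
move=> [y i] [z j] [] E1 /perm_inj E2; rewrite /= in E2; subst j.
by move/perm_inj: E1 => ->.
Qed.
Definition mk sg g : {perm ('I_m * 'I_d)} := perm (@mkfun_inj sg g).
Lemma mkE sg g y i : mk sg g (y, i) = (g (sg i) y, sg i).
Proof. by rewrite permE. Qed.

Variables (sg : {perm 'I_d}) (g : {ffun 'I_d -> {perm 'I_m}}).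
Local Notation s := (mk sg g).

Fixpoint Gp (i : 'I_d) n : {perm 'I_m} :=
  if n is n'.+1 then (Gp i n' * g ((sg ^+ n'.+1)%g i))%g else 1%g.

Lemma mkX n y i : (s ^+ n)%g (y, i) = (Gp i n y, (sg ^+ n)%g i).
Proof.
elim: n y => [|n IH] y; first by rewrite !expg0 !perm1.
by rewrite expgSr permM IH mkE /= !permM expgSr permM.
Qed.

Definition cl i := #|porbit sg i|.
Definition hh i := Gp i (cl i).

Lemma sg_cl i : (sg ^+ cl i)%g i = i.
Proof. by rewrite permX iter_porbit. Qed.

Lemma mkXl k y i : (s ^+ (cl i * k))%g (y, i) = ((hh i ^+ k)%g y, i).
Proof.
elim: k y => [|k IH] y; first by rewrite muln0 !expg0 !perm1.
by rewrite mulnS expgD permM mkX sg_cl IH expgS permM.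
Qed.

Lemma card_porbit_mk y i : #|porbit s (y, i)| = cl i * #|porbit (hh i) y|.
Proof.
apply: card_porbit_unique => n; apply/idP/idP.
  move/eqP => E; have : (sg ^+ n)%g i == i by move: E; rewrite mkX => -[_ ->].
  rewrite expg_porbit_fix -/(cl i) => /dvdnP[k Ek].
  move: E; rewrite Ek mulnC mkXl => -[/eqP].
  by rewrite expg_porbit_fix; apply: dvdn_mul.
move=> /dvdnP[j ->]; rewrite mulnC -mulnA mkXl.
by have /eqP -> : ((hh i ^+ (#|porbit (hh i) y| * j))%g y == y) by rewrite expg_porbit_fix dvdn_mulr.
Qed.


Definition rep (i : 'I_d) := [pick j in porbit sg i] == Some i.

Lemma rep_ex i : exists2 r, rep r & r \in porbit sg i.
Proof.
have [j jin Ej] : exists2 j, j \in porbit sg i & [pick k in porbit sg i] = Some j.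
  by case: pickP => [j jin|H]; [exists j|have := H i; rewrite porbit_id].
exists j => //; rewrite /rep.
have -> : porbit sg j = porbit sg i by apply/eqP; rewrite eq_porbit_mem.
by rewrite Ej.
Qed.

Lemma rep_uniq r r' : rep r -> rep r' -> r \in porbit sg r' -> r = r'.
Proof.
rewrite /rep => /eqP E /eqP E' rin.
have P : porbit sg r = porbit sg r' by apply/eqP; rewrite eq_porbit_mem.
by move: E; rewrite P E' => -[].
Qed.

Hypothesis m_pos : 0 < m.
Let y0 : 'I_m := Ordinal m_pos.
Definition Phi (p : 'I_d * {set 'I_m}) := porbit s (odflt y0 [pick y in p.2], p.1).
Definition PS := [set p : 'I_d * {set 'I_m} | rep p.1 && (p.2 \in porbits (hh p.1))].

Lemma porbit_mk_hh i y z : z \in porbit (hh i) y -> porbit s (z, i) = porbit s (y, i).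
Proof.
case/porbitP => k ->; apply/eqP; rewrite eq_porbit_mem; apply/porbitP.
by exists (cl i * k); rewrite mkXl.
Qed.

Lemma Phi_pair i y : Phi (i, porbit (hh i) y) = porbit s (y, i).
Proof.
rewrite /Phi /=; case: pickP => [z zin|H]; first exact: porbit_mk_hh.
by have := H y; rewrite porbit_id.
Qed.

Lemma Phi_inj : {in PS &, injective Phi}.
Proof.
move=> [i c] [j e]; rewrite !inE /= => /andP[ri /imsetP[y _ ->]] /andP[rj /imsetP[z _ ->]].
rewrite !Phi_pair => E.
have : (y, i) \in porbit s (z, j) by rewrite -E porbit_id.
case/porbitP => n En; move: (En); rewrite mkX => -[_ Ei].
have ij : i = j by apply: rep_uniq ri rj _; rewrite Ei mem_porbit.
subst j; congr pair.
have : ((sg ^+ n)%g i == i) by rewrite -Ei.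
rewrite expg_porbit_fix => /dvdnP[k Ek].
move: En; rewrite Ek mulnC mkXl => -[->].
by apply/eqP; rewrite eq_porbit_mem mem_porbit.
Qed.

Lemma porbits_mk : porbits s = Phi @: PS.
Proof.
apply/setP => c; apply/imsetP/imsetP => [[[y j] _ ->]|[[i e] pin ->]].
  have [r rr /porbitP[t Er]] := rep_ex j.
  exists (r, porbit (hh r) (Gp j t y)); first by rewrite inE /= rr imset_f.
  by rewrite Phi_pair Er -mkX porbit_perm.
move: pin; rewrite inE /= => /andP[_ /imsetP[y _ ->]].
by exists (y, i); rewrite // Phi_pair.
Qed.

Lemma CT_mk n : CT n s =
  (\prod_(i | rep i) \prod_(c in porbits (hh i)) xvar n (cl i * #|c|))%R.
Proof.
rewrite /CT porbits_mk big_imset /=; last exact: Phi_inj.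
rewrite pair_big_dep /=; apply: eq_big => [[i c]|[i c]]; first by rewrite inE.
rewrite inE /= => /andP[_ /imsetP[y _ ->]].
by rewrite Phi_pair card_porbit_mk.
Qed.
End Wreath.



Section Sum.
Variables d m : nat.
Hypothesis m_pos : (0 < m)%N.
Variable sg : {perm 'I_d}.

Definition fam := [set g : {ffun 'I_d -> {perm 'I_m}} | [forall i, g i \in Hol m]].

Local Notation rep := (rep sg).
Local Notation cl := (cl sg).
Implicit Types g : {ffun 'I_d -> {perm 'I_m}}.

Lemma cl_pos i : (0 < cl i)%N.
Proof. by rewrite lt0n card_porbit_neq0. Qed.

Lemma rep_nrep j k : rep j -> (0 < k < cl j)%N -> ~~ rep ((sg ^+ k)%g j).
Proof.
move=> rj /andP[k0 kl]; apply/negP => rk.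
have E := rep_uniq rk rj (mem_porbit _ _ _).
have : ((sg ^+ k)%g j == j) by rewrite E.
rewrite expg_porbit_fix -/(cl j) => /(dvdn_leq k0); by rewrite leqNgt kl.
Qed.

Lemma Gp_nrep (g g' : {ffun 'I_d -> {perm 'I_m}}) j k : (forall i, ~~ rep i -> g i = g' i) -> rep j -> (k < cl j)%N ->
  Gp sg g j k = Gp sg g' j k.
Proof.
move=> H rj; elim: k => [//|k IH] lt /=.
by rewrite IH ?(ltnW lt) // H // rep_nrep // lt.
Qed.

Definition QQ g j := Gp sg g j (cl j).-1.

Lemma hhQ g j : hh sg g j = (QQ g j * g j)%g.
Proof.
rewrite /hh /QQ; have := cl_pos j; case E: (cl j) => [//|k] _ /=.
by rewrite -E sg_cl.
Qed.

Definition Tf g := [ffun j => if rep j then (QQ g j * g j)%g else g j].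
Definition Tb g := [ffun j => if rep j then ((QQ g j)^-1 * g j)%g else g j].

Lemma QQ_nrep (g g' : {ffun 'I_d -> {perm 'I_m}}) j : (forall i, ~~ rep i -> g i = g' i) -> rep j -> QQ g j = QQ g' j.
Proof. by move=> H rj; apply: Gp_nrep => //; rewrite prednK ?cl_pos. Qed.

Lemma QQ_Tb g j : rep j -> QQ (Tb g) j = QQ g j.
Proof. by move=> rj; apply: QQ_nrep => // i ni; rewrite ffunE (negbTE ni). Qed.
Lemma QQ_Tf g j : rep j -> QQ (Tf g) j = QQ g j.
Proof. by move=> rj; apply: QQ_nrep => // i ni; rewrite ffunE (negbTE ni). Qed.

Lemma TbK : cancel Tb Tf.
Proof.
move=> g; apply/ffunP => j; rewrite !ffunE; case: ifP => rj //.
  by rewrite rj QQ_Tb // mulgA mulgV mul1g.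
by rewrite rj.
Qed.

Lemma hh_Tb g j : rep j -> hh sg (Tb g) j = g j.
Proof. by move=> rj; rewrite hhQ QQ_Tb // ffunE rj mulgA mulgV mul1g. Qed.

Lemma Gp_Hol g j k : g \in fam -> Gp sg g j k \in Hol m.
Proof.
rewrite inE => /forallP H.
elim: k => [|k IH] /=; first exact: (group1 (HolG m_pos)).
exact: (groupM (G := HolG m_pos)).
Qed.

Lemma Tb_fam g : (Tb g \in fam) = (g \in fam).
Proof.
have key : forall g, g \in fam -> (Tb g \in fam) && (Tf g \in fam).
  move=> h hf; have QH : forall j, QQ h j \in HolG m_pos by move=> j; apply: Gp_Hol.
  move: (hf); rewrite !inE => /forallP H; apply/andP; split; apply/forallP => j;
  rewrite ffunE; case: ifP => _ //; apply: (groupM (G := HolG m_pos)) => //;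
  by [apply: QH|apply: (groupVr (G := HolG m_pos)); apply: QH].
apply/idP/idP => [/key/andP[_]|/key/andP[] //]; by rewrite TbK.
Qed.

Variable n : nat.
Variable Psi : 'I_d -> {perm 'I_m} -> {mpoly rat[n.+1]}.

Lemma sum_fam :
  \sum_(g in fam) \prod_(i | rep i) Psi i (hh sg g i) =
  \prod_i (if rep i then \sum_(h in Hol m) Psi i h else (#|Hol m|%:R)).
Proof.
rewrite (reindex_inj (can_inj TbK)) /=.
under eq_bigl do rewrite Tb_fam.
under eq_bigr => g _ do under eq_bigr => i ri do rewrite hh_Tb //.
have -> : \prod_i (if rep i then \sum_(h in Hol m) Psi i h else (#|Hol m|%:R : {mpoly rat[n.+1]}))
  = \prod_i \sum_(h in Hol m) (if rep i then Psi i h else 1).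
  apply: eq_bigr => i _; case: ifP => _ //.
  by rewrite sumr_const.
rewrite bigA_distr_big_dep; apply: eq_big => [g|g _].
  by rewrite inE; apply/forallP/familyP.
by rewrite big_mkcond.
Qed.
End Sum.

Lemma CT_mPo (T : finType) k n (h : {perm T}) (lq : (k.+1).-tuple {mpoly rat[n.+1]}) :
  CT k h \mPo lq = \prod_(c in porbits h) lq`_(@inord k #|c|).
Proof.
rewrite /CT rmorph_prod; apply: eq_bigr => c _.
rewrite /xvar; exact: comp_mpolyXU.
Qed.

Lemma CIpowE n m l : CIpow n (CI m (Hol m)) l =
  (#|Hol m|%:R)^-1 *: \sum_(h in Hol m) \prod_(c in porbits h) xvar n (#|c| * l).
Proof.
rewrite /CIpow /CI comp_mpolyZ; congr (_ *: _). rewrite (big_morph _ (comp_mpolyD _) (comp_mpoly0 _)); apply: eq_bigr => h _.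
rewrite CT_mPo; apply: eq_bigr => c _; rewrite (nth_mktuple _ 0 (inord #|c|)) inordK //.
by rewrite ltnS (leq_trans (max_card _)) ?card_ord.
Qed.

Lemma prod_porbits_rep d (sg : {perm 'I_d}) (R : comRingType) (F : {set 'I_d} -> R) :
  \prod_(C in porbits sg) F C = \prod_(i | rep sg i) F (porbit sg i).
Proof.
have -> : porbits sg = porbit sg @: [set i | rep sg i].
  apply/setP => C; apply/imsetP/imsetP => [[i _ ->]|[i _ ->]]; last by exists i.
  have [r rr rin] := rep_ex sg i; exists r; first by rewrite inE.
  by apply/eqP; rewrite eq_porbit_mem porbit_sym.
rewrite big_imset /=; first by apply: eq_bigl => i; rewrite inE.
move=> i j; rewrite !inE => ri rj E; apply: (rep_uniq ri rj).
by rewrite -E porbit_id.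
Qed.

Lemma prod_scale d (P : pred 'I_d) n (k : nat) (S : 'I_d -> {mpoly rat[n.+1]}) : (0 < k)%N ->
  \prod_i (if P i then S i else k%:R) = (k ^ d)%:R *: \prod_(i | P i) ((k%:R)^-1 *: S i).
Proof.
move=> k0; have kn0 : (k%:R : rat) != 0 by rewrite pnatr_eq0 -lt0n.
transitivity (\prod_i ((k%:R : rat) *: (if P i then (k%:R)^-1 *: S i else 1))).
  apply: eq_bigr => i _; case: ifP => _; last by rewrite scaler_nat.
  by rewrite scalerA mulfV // scale1r.
rewrite scaler_prod prodr_const card_ord -natrX; congr (_ *: _).
by rewrite [RHS]big_mkcond.
Qed.

Section Part1.
Variables d m n : nat.
Hypothesis m_pos : (0 < m)%N.

Definition mkp (p : {perm 'I_d} * {ffun 'I_d -> {perm 'I_m}}) := mk p.1 p.2.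

Lemma mkp_inj : injective mkp.
Proof.
move=> [s g] [s' g'] /= E.
have Es : s = s'.
  apply/permP => i; have := congr1 (fun t : {perm _} => t (Ordinal m_pos, i)) E.
  by rewrite /= !mkE => -[].
subst s'; congr pair; apply/ffunP => j; apply/permP => y.
have := congr1 (fun t : {perm _} => t (y, s^-1%g j)) E.
by rewrite /= !mkE permKV => -[].
Qed.

Lemma W_eq : W d m = mkp @: setX [set: {perm 'I_d}] (fam d m).
Proof.
apply/setP => t; rewrite inE; apply/existsP/imsetP => [[s /existsP[g /andP[gH /forallP E]]]|].
  exists (s, g); first by rewrite !inE.
  by apply/permP => -[y i]; rewrite /mkp /= mkE; apply/eqP/E.
move=> [[s g]]; rewrite !inE /= => gH ->; exists s; apply/existsP; exists g.
by rewrite gH; apply/forallP => -[y i]; rewrite /mkp /= mkE.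
Qed.

Lemma Hol_card_pos : (0 < #|Hol m|)%N.
Proof. by apply/card_gt0P; exists 1%g; exact: (group1 (HolG m_pos)). Qed.

Lemma card_fam : #|fam d m| = (#|Hol m| ^ d)%N.
Proof.
rewrite -[X in (_ ^ X)%N](card_ord d) -card_ffun_on; apply: eq_card => g.
by rewrite inE; apply/forallP/familyP.
Qed.

Lemma part1 : CI n (W d m) = wreath_CI n d m.
Proof.
rewrite /CI /wreath_CI W_eq card_imset; last exact: mkp_inj.
rewrite big_imset /=; last by move=> ? ? _ _; apply: mkp_inj.
rewrite cardsX card_fam comp_mpolyZ.
rewrite (big_morph _ (comp_mpolyD _) (comp_mpoly0 _)).
have -> : \sum_(p in setX [set: {perm 'I_d}] (fam d m)) CT n (mkp p) =
   \sum_(s : {perm 'I_d}) \sum_(g in fam d m) CT n (mk s g).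
  rewrite pair_big_dep /=; apply: eq_bigl => -[s g]; by rewrite !inE.
rewrite natrM invfM -scalerA; congr (_ *: _).
rewrite scaler_sumr; apply: eq_big => [s|s _]; first by rewrite /Sym inE.
under eq_bigr => g _ do rewrite (CT_mk _ _ m_pos).
rewrite (sum_fam m_pos s (fun i h => \prod_(c in porbits h) xvar n (cl s i * #|c|))).
rewrite (prod_scale _ _ Hol_card_pos) scalerA mulVf; last first.
  by rewrite pnatr_eq0 -lt0n expn_gt0 Hol_card_pos.
rewrite scale1r CT_mPo prod_porbits_rep; apply: eq_bigr => i _.
rewrite (nth_mktuple _ 0 (inord #|porbit s i|)) inordK; last first.
  by rewrite ltnS (leq_trans (max_card _)) ?card_ord.
rewrite CIpowE; congr (_ *: _); apply: eq_bigr => h _; apply: eq_bigr => c _.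
by rewrite mulnC.
Qed.
End Part1.

Section Arith.
Local Open Scope nat_scope.

Lemma coprime_of_inv r y m : 0 < m -> r * y = 1 %[mod m] -> coprime r m.
Proof.
move=> m0 E; case: (ltngtP m 1) => [|m1|->]; last by rewrite coprimen1.
  by rewrite ltnS leqn0 => /eqP Em; rewrite Em in m0.
rewrite (modn_small m1) in E.
rewrite /coprime -dvdn1.
have h1 : gcdn r m %| (r * y) %/ m * m by apply: dvdn_mull; apply: dvdn_gcdr.
have : gcdn r m %| (r * y) %/ m * m + (r * y) %% m.
  by rewrite -divn_eq; apply: dvdn_mulr; apply: dvdn_gcdl.
by rewrite E (dvdn_addr _ h1).
Qed.

Lemma enc_lt d m i k : i < d -> k < m -> i + d * k < m * d.
Proof.
move=> id km; apply: (@leq_trans (d * k.+1)); first by rewrite mulnS ltn_add2r.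
by rewrite mulnC leq_mul2r km orbT.
Qed.

Lemma enc_mod d i k : i < d -> (i + d * k) %% d = i.
Proof. by move=> id; rewrite addnC mulnC modnMDl modn_small. Qed.

Lemma enc_div d i k : i < d -> (i + d * k) %/ d = k.
Proof.
move=> id; have d0 : 0 < d by apply: leq_ltn_trans id.
by rewrite addnC mulnC divnMDl // divn_small // addn0.
Qed.

Lemma dec_eq d m E : 0 < d -> E = E %% d + d * (E %/ d %% m) %[mod m * d].
Proof.
move=> d0; rewrite {1}(divn_eq E d) {1}(divn_eq (E %/ d) m).
by rewrite mulnDl -mulnA -addnA modnMDl addnC mulnC.
Qed.
End Arith.

Section GCPsetup.
Local Open Scope nat_scope.
Variables (F : finFieldType) (d : nat) (w : {unit F}) (C : {group {unit F}}).
Hypotheses (d_pos : 0 < d) (dN : d %| #|F|.-1) (hw : <[w]>%g = [set: {unit F}])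
  (hC : #|[set: {unit F}] : C|%g = d).

Local Notation N := #|F|.-1.
Local Notation m := (#|F|.-1 %/ d).

Lemma ordw : #[w]%g = N.
Proof. by rewrite orderE hw card_finField_unit. Qed.
Lemma N_pos : 0 < N.
Proof. by rewrite -ordw order_gt0. Qed.
Lemma Nmd : N = m * d.
Proof. by rewrite divnK. Qed.
Lemma m_pos' : 0 < m.
Proof. by move: N_pos; rewrite {1}Nmd muln_gt0 => /andP[]. Qed.

Definition phi (p : 'I_m * 'I_d) : {unit F} := (w ^+ (p.2 + d * p.1))%g.
Definition dec E : 'I_m * 'I_d :=
  (Ordinal (ltn_pmod (E %/ d) m_pos'), Ordinal (ltn_pmod E d_pos)).

Lemma w_dec E : (w ^+ E)%g = phi (dec E).
Proof.
rewrite /phi; apply/eqP; rewrite eq_expg_mod_order ordw /=; apply/eqP.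
by have := dec_eq m E d_pos; rewrite -Nmd.
Qed.


Lemma dec_phi (p : 'I_m * 'I_d) : dec (p.2 + d * p.1) = p.
Proof.
case: p => k i; congr pair; apply/val_inj => /=.
  by rewrite enc_div // modn_small.
by rewrite enc_mod.
Qed.

Lemma phi_inj : injective phi.
Proof.
move=> p q /eqP; rewrite /phi eq_expg_mod_order ordw.
have lt : forall r : 'I_m * 'I_d, r.2 + d * r.1 < N.
  by move=> r; have := enc_lt (ltn_ord r.2) (ltn_ord r.1); rewrite -Nmd.
rewrite !modn_small ?lt // => /eqP E.
by rewrite -(dec_phi p) E dec_phi.
Qed.

Lemma mem_w (u : {unit F}) : u \in <[w]>%g.
Proof. by rewrite hw inE. Qed.
Definition dlog (u : {unit F}) : nat := sval (cyclePmin (mem_w u)).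
Lemma dlogK u : (w ^+ dlog u)%g = u.
Proof. by rewrite /dlog; case: (cyclePmin _) => i _ /= ->. Qed.

Definition phi' (u : {unit F}) := dec (dlog u).
Lemma phi'K : cancel phi' phi.
Proof. by move=> u; rewrite /phi' -w_dec dlogK. Qed.
Lemma phiK : cancel phi phi'.
Proof. by move=> p; apply: phi_inj; rewrite phi'K. Qed.

Lemma C_eq : (C :=: <[w ^+ d]>)%g.
Proof.
have mw : m %| #[w]%g by rewrite ordw; apply/dvdnP; exists d; rewrite mulnC -Nmd.
have : C \in [set H : {group {unit F}} | H \subset <[w]>%g & #|H| == m].
  rewrite inE hw subsetT /=.
  have := LagrangeI [set: {unit F}]%G C; rewrite setTI hC card_finField_unit => H.
  by rewrite -(eqn_pmul2r d_pos) -Nmd H.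
rewrite cycle_sub_group // => /set1P ->.
have Ndiv : N %/ m = d.
  have H := Nmd; have mp := m_pos'; set M := m in H mp *; by rewrite {1}H mulKn.
have Ndiv' : (#[w]%g %/ m = d) by rewrite ordw.
by rewrite Ndiv'.
Qed.

Lemma coset_phi (i : 'I_d) p : (phi p \in lcoset C (w ^+ i)%g) = (p.2 == i).
Proof.
rewrite lcosetE mem_lcoset C_eq /phi; apply/idP/eqP => [|E].
  case/cycleP => t; rewrite -expgM => /(congr1 (mulg (w ^+ i)%g)).
  rewrite mulKVg -expgD => /eqP; rewrite eq_expg_mod_order ordw => /eqP.
  move/(congr1 (modn^~ d)); rewrite !modn_dvdm // !enc_mod //.
  by move/val_inj.
by rewrite E expgD mulKg expgM mem_cycle.
Qed.

End GCPsetup.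

Lemma conjpK (T U : finType) (f : T -> U) (f' : U -> T) (fK : cancel f f') (f'K : cancel f' f)
  (s : {perm U}) : conjp fK f'K (conjp f'K fK s) = s.
Proof. by apply/permP => u; rewrite !permE /conjfun !permE /conjfun !f'K. Qed.

Lemma surj_inj (T : finType) (f : T -> T) : (forall y, exists x, f x = y) -> injective f.
Proof.
move=> H; have [g fg] := fin_all_exists H.
have gi : injective g by apply: (can_inj fg).
have E : forall x, x = g (f x).
  by move=> x; have /codomP[j ->] := injF_onto gi x; rewrite fg.
by move=> x y Exy; rewrite (E x) (E y) Exy.
Qed.

Section AR.
Local Open Scope nat_scope.
Lemma ar1 D M A B k R x : R = A %[mod M] ->
  (x + D * ((A * k + B) %% M) = x + D * B + D * k * R %[mod M * D])%N.
Proof.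
move=> HR.
have h1 : D * ((A * k + B) %% M) = D * ((R * k + B) %% M).
  by rewrite -modnDml -modnMml -HR modnMml modnDml.
rewrite h1 muln_modr [M * D]mulnC modnDmr; congr (_ %% _); lia.
Qed.
End AR.

Section GCPeq.
Local Open Scope nat_scope.
Variables (F : finFieldType) (d : nat) (w : {unit F}) (C : {group {unit F}}).
Hypotheses (d_pos : 0 < d) (dN : d %| #|F|.-1) (hw : <[w]>%g = [set: {unit F}])
  (hC : #|[set: {unit F}] : C|%g = d).

Local Notation N := #|F|.-1.
Local Notation m := (#|F|.-1 %/ d).
Local Notation ph := (@phi F d w).
Local Notation ph' := (phi' d_pos dN hw).
Let K1 : cancel ph ph' := phiK d_pos dN hw.
Let K2 : cancel ph' ph := phi'K d_pos dN hw.
Let mp := m_pos' dN hw.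

Lemma ph'_w E : ph' (w ^+ E)%g = dec d_pos dN hw E.
Proof. by rewrite (w_dec d_pos dN hw) K1. Qed.

Lemma GCP_data (t : {perm {unit F}}) : t \in GCP d w C ->
  forall i : 'I_d, exists R B T : nat, forall y : 'I_m,
    val (conjp K2 K1 t (y, i)).1 = (B + y * R) %% m /\ val (conjp K2 K1 t (y, i)).2 = T.
Proof.
rewrite inE => /existsP[a /existsP[r /andP[_ /forallP H]]] i.
have Hi : forall y : 'I_m, val (t (ph (y, i))) = (a i * val (ph (y, i)) ^+ r i)%R.
  move=> y; have := H i; move/forallP/(_ (ph (y, i))).
  by rewrite (coset_phi d_pos dN hw hC) eqxx /= => /eqP.
have a0 : (a i != 0)%R.
  apply/negP => /eqP a0; have := Hi (Ordinal mp); rewrite a0 GRing.mul0r => E.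
  by have := valP (t (ph (Ordinal mp, i))); rewrite E GRing.unitr0.
have [E hE] : exists E, a i = val (w ^+ E)%g.
  have ua : a i \is a GRing.unit by rewrite GRing.unitfE.
  have /cycleP[E hE] := mem_w hw (FinRing.Unit ua).
  by exists E; rewrite -hE.
exists (r i), ((E + i * r i) %/ d), ((E + i * r i) %% d) => y.
have -> : conjp K2 K1 t (y, i) = ph' (t (ph (y, i))).
  by rewrite -{1}(K1 (y, i)) conjpE.
have -> : t (ph (y, i)) = (w ^+ (E + i * r i + y * r i * d))%g.
  apply: val_inj; rewrite Hi hE -FinRing.val_unitX -FinRing.val_unitM /phi /=.
  rewrite -expgM [X in _ = FinRing.uval X](_ : _ = (w ^+ E * w ^+ ((i + d * y) * r i))%g) //.
  by rewrite -expgD; congr (_ ^+ _)%g; rewrite mulnDl addnA [d * y]mulnC mulnAC.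
have e := ph'_w (E + i * r i + y * r i * d); split.
  apply: etrans (congr1 (fun p => nat_of_ord p.1) e) _ => /=.
  by rewrite addnC divnMDl // addnC.
apply: etrans (congr1 (fun p => nat_of_ord p.2) e) _ => /=.
by rewrite addnC modnMDl.
Qed.


Lemma GCP_sub t : t \in GCP d w C -> conjp K2 K1 t \in W d m.
Proof.
move=> tG; set s := conjp K2 K1 t.
have D := GCP_data tG; rewrite -/s in D.
pose y0 : 'I_m := Ordinal mp.
pose tau i := (s (y0, i)).2.
have htau : forall y i, (s (y, i)).2 = tau i.
  move=> y i; have [R [B [T HT]]] := D i; apply: val_inj.
  by rewrite /tau (proj2 (HT y)) (proj2 (HT y0)).
have tau_inj : injective tau.
  apply: surj_inj => j; exists ((s^-1)%g (y0, j)).2.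
  by rewrite -(htau ((s^-1)%g (y0, j)).1) -surjective_pairing permKV.
pose sg := perm tau_inj.
have gi : forall j, injective (fun y => (s (y, (sg^-1)%g j)).1).
  move=> j y y' E; have : s (y, (sg^-1)%g j) = s (y', (sg^-1)%g j).
    by rewrite [LHS]surjective_pairing [RHS]surjective_pairing E !htau.
  by move/perm_inj => -[].
pose g := [ffun j => perm (gi j)].
rewrite inE; apply/existsP; exists sg; apply/existsP; exists g; apply/andP; split.
  apply/forallP => j; apply/(HolP mp).
  have [R [B [T HT]]] := D ((sg^-1)%g j).
  have hg : forall y, val (g j y) = (B + y * R) %% m.
    by move=> y; rewrite ffunE permE /= (proj1 (HT y)).
  exists R, B; split; last by move=> y; rewrite hg addnC mulnC.
  pose z : 'I_m := Ordinal (ltn_pmod (B + 1) mp).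
  have := hg ((g j)^-1%g z); rewrite permKV /= => /esym E.
  apply: (coprime_of_inv (y := (g j)^-1%g z)) => //.
  by move/eqP: E; rewrite eqn_modDl mulnC => /eqP.
apply/forallP => -[y i] /=; rewrite ffunE.
have e1 : (perm (gi (sg i))) y = (s (y, i)).1 by rewrite permE /= permK.
have e2 : sg i = tau i by rewrite permE.
by rewrite e1 e2 -(htau y i) -surjective_pairing.
Qed.


Lemma W_sub s : s \in W d m -> conjp K1 K2 s \in GCP d w C.
Proof.
rewrite inE => /existsP[sg /existsP[g /andP[/forallP gH /forallP hs]]].
have [AB HAB] : exists AB : 'I_d -> nat * nat, forall j,
    coprime (AB j).1 m /\ forall y, val (g j y) = ((AB j).1 * y + (AB j).2) %% m.
  apply: (@fin_all_exists _ (fun=> (nat * nat)%type) (fun j (ab : nat * nat) =>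
    coprime ab.1 m /\ forall y, val (g j y) = (ab.1 * y + ab.2) %% m)) => j.
  by have /(HolP mp)[A [B [cA HA]]] := gH j; exists (A, B).
pose A i := (AB (sg i)).1; pose B i := (AB (sg i)).2.
pose Rr i := if A i %% m == 0 then m else A i %% m.
have HR : forall i, Rr i = A i %[mod m].
  by move=> i; rewrite /Rr; case: ifP => [/eqP ->|_]; rewrite ?modnn ?modn_mod.
have Rb : forall i, 0 < Rr i <= m.
  move=> i; rewrite /Rr; case: ifP => [_|/negbT]; first by rewrite mp leqnn.
  by rewrite -lt0n => ->; rewrite ltnW // ltn_pmod.
have F0 : 0 < #|F| by apply/card_gt0P; exists 0%R.
have RF : forall i, Rr i < #|F|.
  move=> i; have /andP[_ h] := Rb i; apply: (leq_ltn_trans h).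
  by apply: (leq_ltn_trans (leq_div _ _)); rewrite ltn_predL.
pose r := [ffun i => Ordinal (RF i)].
pose a := [ffun i => val ((w ^+ (sg i + d * B i)) * (w ^+ (Rr i * i))^-1)%g].
rewrite inE; apply/existsP; exists a; apply/existsP; exists r; apply/andP; split.
  by apply/forallP => i; rewrite ffunE /= Rb.
apply/forallP => i; apply/forallP => u; apply/implyP.
rewrite -(K2 u); case: (ph' u) => k j; rewrite (coset_phi d_pos dN hw hC) /= => /eqP ->.
rewrite conjpE (eqP (hs (k, i))) /= !ffunE /=.
have -> : (FinRing.uval (w ^+ (sg i + d * B i)) / FinRing.uval (w ^+ (Rr i * i)) *
   FinRing.uval (ph (k, i)) ^+ Rr i)%R = FinRing.uval (w ^+ (sg i + d * B i + d * k * Rr i))%g.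
  rewrite -FinRing.val_unitV -FinRing.val_unitX -!FinRing.val_unitM; congr FinRing.uval.
  rewrite /phi /= -expgM mulnDl [i * _]mulnC expgD mulgA -(mulgA _ _ (w ^+ (Rr i * i))%g) mulVg mulg1.
  by rewrite -expgD mulnAC.
rewrite -[FinRing.uval _ == _]/(val _ == val _) val_eqE /phi /=.
rewrite eq_expg_mod_order (ordw hw).
have [_ Hg] := HAB (sg i).
rewrite Hg; have := ar1 d (B i) k (sg i) (HR i); rewrite -(Nmd dN) => /eqP.
exact: id.
Qed.

Lemma GCP_eq : GCP d w C = conjp K1 K2 @: W d m.
Proof.
apply/setP => t; apply/idP/imsetP => [tG|[s sW ->]]; last exact: W_sub.
by exists (conjp K2 K1 t); [exact: GCP_sub|rewrite conjpK].
Qed.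

Lemma part2 : CI N (GCP d w C) = wreath_CI N d m.
Proof. by rewrite (CI_conjp _ GCP_eq) part1. Qed.
End GCPeq.

Theorem proposition6p2 :
  (forall d m : nat, (0 < d)%N -> (0 < m)%N ->
     CI (d * m) (W d m) = wreath_CI (d * m) d m) /\
  (forall (F : finFieldType) (d : nat) (w : {unit F}) (C : {group {unit F}}),
     (0 < d)%N -> (d %| #|F|.-1)%N ->
     <[w]>%g = [set: {unit F}] ->
     #|[set: {unit F}] : C|%g = d ->
     CI (#|F|.-1) (GCP d w C) = wreath_CI (#|F|.-1) d (#|F|.-1 %/ d)).
Proof.
split; first by move=> d m _ mp; apply: part1.
by move=> F d w C d0 dN hw hC; apply: part2.
Qed.
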